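(* Let $(S,\lambda_S^\bullet,\mu_S^{(0)})$, $(G,\lambda_G^\bullet,\mu_G^{(0)})$, $(T,\lambda_T^\bullet,\mu_T^{(0)})$ be Haar groupoids, $p:S\to G$, $q:T\to G$ homomorphisms of Haar groupoids with weak pullback $P$. Let $\gamma_p^\bullet$ be a locally finite Borel system of measures on $p|_{S^{(0)}}:S^{(0)}\to G^{(0)}$ which is a disintegration of $\mu_S^{(0)}$ with respect to $\mu_G^{(0)}$, and $\gamma_q^\bullet$ a locally finite Borel system of measures on $q|_{T^{(0)}}:T^{(0)}\to G^{(0)}$ which is a disintegration of $\mu_T^{(0)}$ with respect to $\mu_G^{(0)}$. Then the projection $\pi_G:P^{(0)}\to G$, $(s,g,t)\mapsto g$, admits a locally finite Borel system of measures $\eta^\bullet$ given by $\eta^x=\gamma_p^{r_G(x)}\times\delta_x\times\gamma_q^{d_G(x)}$ for $x\in G$.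
   Context: A system of measures on a Borel map $\pi:X\to Y$ is a family $\{\lambda^y\}_{y\in Y}$ of positive Borel measures on $X$ with each $\lambda^y$ concentrated on $\pi^{-1}(y)$; it is a Borel system of measures (BSM) if $y\mapsto\lambda^y(E)$ is Borel for each Borel $E\subseteq X$; it is locally finite if every $x\in X$ has a neighborhood $U$ with $\lambda^y(U)<\infty$ for all $y$. A BSM $\gamma^\bullet$ on $f:X\to Y$ is a disintegration of a measure $\mu$ on $X$ with respect to a measure $\nu$ on $Y$ if $\mu(E)=\int_Y\gamma^y(E)\,d\nu(y)$ for all Borel $E$. For a groupoid, $G^{(0)}$ is the unit space, $r,d$ range/source, $G^u=r^{-1}(u)$. A Haar groupoid $(G,\lambda^\bullet,\mu^{(0)})$ is a second countable, locally compact, Hausdorff topological groupoid with a continuous left Haar system $\lambda^\bullet$ (a system of measures on $r$ that is continuous in the sense that $u\mapsto\int f d\lambda^u$ is continuous for continuous compactly supported $f\ge0$, left invariant $\lambda^{d(x)}(E)=\lambda^{r(x)}(x(E\cap G^{d(x)}))$, and positive on open sets meeting $G^u$) and a non-zero Radon measure $\mu^{(0)}$ on $G^{(0)}$ quasi-invariant in the sense that the induced measure $\mu(E)=\int\lambda^u(E)d\mu^{(0)}(u)$ is equivalent to $E\mapsto\mu(E^{-1})$. A homomorphism of Haar groupoids is a continuous groupoid homomorphism preserving the measure class of induced measures. The weak pullback has unit space $P^{(0)}=\{(s,g,t)\in S^{(0)}\times G\times T^{(0)}: r_G(g)=p(s),\ d_G(g)=q(t)\}$ with the subspace topology; $\eta^x$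 is a measure on $S^{(0)}\times G\times T^{(0)}$ concentrated on $P^{(0)}$, regarded as a measure on $P^{(0)}$. *)

(* Defs.v *)
From HB Require Import structures.
From mathcomp Require Import all_boot all_order all_algebra.
From mathcomp Require Import all_classical all_reals all_analysis.
From mathcomp Require Import measurable_realfun lebesgue_integral.
Set Implicit Arguments. Unset Strict Implicit. Unset Printing Implicit Defensive.
Import Order.TTheory GRing.Theory Num.Theory.
Import numFieldNormedType.Exports.
Local Open Scope classical_set_scope.
Local Open Scope ring_scope.

(* products of pointed topological spaces are pointed topological spaces *)
HB.saturate prod.

Definition BorelT (T : ptopologicalType) := g_sigma_algebraType (@open T).

(* Groupoids (unit space G0 as a subset of G, range r, source d,            *)
(* multiplication mul defined on composable pairs (d x = r y), inverse inv) *)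
Definition is_groupoid (G : Type) (G0 : set G) (r d : G -> G)
    (mul : G -> G -> G) (inv : G -> G) : Prop :=
  [/\ (forall x, G0 (r x) /\ G0 (d x)),
      (forall u, G0 u -> r u = u /\ d u = u),
      (forall x y, d x = r y -> r (mul x y) = r x /\ d (mul x y) = d y),
      (forall x y z, d x = r y -> d y = r z -> mul (mul x y) z = mul x (mul y z)) &
      (forall x, mul (r x) x = x /\ mul x (d x) = x)] /\
      (forall x, [/\ r (inv x) = d x, d (inv x) = r x,
                     mul x (inv x) = r x & mul (inv x) x = d x]).

Definition is_lcsc_topological_groupoid (G : ptopologicalType) (G0 : set G)
    (r d : G -> G) (mul : G -> G -> G) (inv : G -> G) : Prop :=
  is_groupoid G0 r d mul inv /\
  [/\ {within [set xy : G * G | d xy.1 = r xy.2], continuous (fun xy => mul xy.1 xy.2)},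
      continuous inv,
      @second_countable G,
      locally_compact [set: G] &
      hausdorff_space G].

Section HaarDefs.
Context {R : realType}.
Local Open Scope ereal_scope.

Definition is_haar_system (G : ptopologicalType) (G0 : set G) (r d : G -> G)
    (mul : G -> G -> G) (lam : G -> {measure set (BorelT G) -> \bar R}) : Prop :=
  [/\
      (forall u, G0 u -> lam u (~` (r @^-1` [set u])) = 0),
      (forall f : G -> R, continuous f -> compact (closure [set x | f x != 0%R]) ->
         (forall x, (0 <= f x)%R) ->
         (forall u, G0 u -> \int[lam u]_x (f x)%:E \is a fin_num) /\
         {within G0, continuous (fun u => fine (\int[lam u]_x (f x)%:E))}),
      (forall x (E : set (BorelT G)), measurable E ->
         lam (d x) E = lam (r x) (mul x @` (E `&` (r @^-1` [set d x])))) &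
      (forall u, G0 u -> forall U : set G, open U ->
         U `&` (r @^-1` [set u]) !=set0 -> 0 < lam u U)].

(* Radon measure on the subspace X0 (extended by zero outside X0) *)
Definition is_radon_on (X : ptopologicalType) (X0 : set X)
    (mu : {measure set (BorelT X) -> \bar R}) : Prop :=
  [/\ mu (~` X0) = 0,
      (forall K : set X, compact K -> K `<=` X0 -> mu K < +oo),
      (forall E : set (BorelT X), measurable E -> E `<=` X0 ->
         mu E = ereal_inf [set mu U | U in [set U : set X | open U /\ E `<=` U]]) &
      (forall U : set X, open U ->
         mu U = ereal_sup [set mu K | K in [set K : set X | compact K /\ K `<=` U `&` X0]])].

Definition induced_measure (G : ptopologicalType) (G0 : set G)
    (lam : G -> {measure set (BorelT G) -> \bar R})
    (mu0 : {measure set (BorelT G) -> \bar R}) (E : set G) : \bar R :=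
  \int[mu0]_(u in (G0 : set (BorelT G))) lam u E.

End HaarDefs.

Record HaarGroupoid (R : realType) (G : ptopologicalType) := {
  g0 : set G;
  rng : G -> G;
  src : G -> G;
  gmul : G -> G -> G;
  ginv : G -> G;
  hlam : G -> {measure set (BorelT G) -> \bar R};
  hmu0 : {measure set (BorelT G) -> \bar R};
  hg_groupoid : is_lcsc_topological_groupoid g0 rng src gmul ginv;
  hg_haar : is_haar_system g0 rng src gmul hlam;
  hg_mu0_radon : is_radon_on g0 hmu0;
  hg_mu0_nonzero : hmu0 setT <> 0%E;
  hg_quasi_invariant : forall E : set (BorelT G), measurable E ->
      (induced_measure g0 hlam hmu0 E = 0%E <->
       induced_measure g0 hlam hmu0 (ginv @` E) = 0%E) }.

Definition is_haar_hom (R : realType) (S G : ptopologicalType)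
    (HS : HaarGroupoid R S) (HG : HaarGroupoid R G) (p : S -> G) : Prop :=
  [/\ continuous p,
      (forall x y, src HS x = rng HS y ->
         src HG (p x) = rng HG (p y) /\ p (gmul HS x y) = gmul HG (p x) (p y)) &
      (forall E : set (BorelT G), measurable E ->
         (induced_measure (g0 HG) (hlam HG) (hmu0 HG) E = 0%E <->
          induced_measure (g0 HS) (hlam HS) (hmu0 HS) (p @^-1` E) = 0%E))].

Section BSM.
Context {R : realType} {X Y : ptopologicalType}.
Local Open Scope ereal_scope.

Definition locally_finite_BSM (X0 : set X) (pi : X -> Y) (Y0 : set Y)
    (lam : Y -> set X -> \bar R) : Prop :=
  [/\
      (forall y, Y0 y -> exists m : {measure set (BorelT X) -> \bar R},
          forall E : set (BorelT X), measurable E -> m E = lam y E),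
      (forall y, Y0 y -> lam y (~` (X0 `&` pi @^-1` [set y])) = 0),
      (forall E : set (BorelT X), measurable E -> E `<=` X0 ->
         measurable_fun (Y0 : set (BorelT Y)) (fun y : BorelT Y => lam y E)) &
      (forall x, X0 x -> exists U : set X,
          [/\ open U, U x & forall y, Y0 y -> lam y U < +oo])].

Definition is_disintegration (X0 : set X) (Y0 : set Y) (gam : Y -> set X -> \bar R)
    (mu : {measure set (BorelT X) -> \bar R}) (nu : {measure set (BorelT Y) -> \bar R}) : Prop :=
  forall E : set (BorelT X), measurable E -> E `<=` X0 ->
    mu E = \int[nu]_(y in (Y0 : set (BorelT Y))) gam y E.

End BSM.

Definition pullback_units (R : realType) (S G T : ptopologicalType)
    (HS : HaarGroupoid R S) (HG : HaarGroupoid R G) (HT : HaarGroupoid R T)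
    (p : S -> G) (q : T -> G) : set (S * G * T) :=
  [set z | [/\ g0 HS z.1.1, g0 HT z.2, rng HG z.1.2 = p z.1.1 & src HG z.1.2 = q z.2]].

(* eta^x = gamma_p^{r(x)} x delta_x x gamma_q^{d(x)}, the product measure
   (defined, as mathcomp's product_measure1, by iterated integration) *)
Definition eta_measure (R : realType) (S G T : ptopologicalType) (HG : HaarGroupoid R G)
    (gp : G -> {measure set (BorelT S) -> \bar R})
    (gq : G -> {measure set (BorelT T) -> \bar R})
    (x : G) (E : set (S * G * T)) : \bar R :=
  \int[gp (rng HG x)]_s
     \int[gq (src HG x)]_t (\1_E ((s, x, t) : S * G * T))%:E.

(* Main.v *)
Require Import Defs.
From HB Require Import structures.
From mathcomp Require Import all_boot all_order all_algebra.
From mathcomp Require Import all_classical all_reals all_analysis.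
From mathcomp Require Import measurable_realfun lebesgue_integral.
Import Order.TTheory GRing.Theory Num.Theory.
Import numFieldNormedType.Exports.
Local Open Scope classical_set_scope.
Local Open Scope ring_scope.
Local Open Scope ereal_scope.


Lemma nbhs_prod_rect (X Y : ptopologicalType) (x : X) (y : Y) (U : set (X*Y)%type) :
  nbhs (x,y) U -> exists A B, nbhs x A /\ nbhs y B /\ A `*` B `<=` U.
Proof.
move=> [[A B] /= [hA hB] sub]; exists A, B; split => //; split => //.
Qed.

Lemma open_setX' (X Y : ptopologicalType) (A : set X) (B : set Y) :
  open A -> open B -> open (A `*` B).
Proof.
move=> oA oB; rewrite openE => -[x y] [/= Ax By].
exists (A, B) => //=; split; [exact: open_nbhs_nbhs | exact: open_nbhs_nbhs].
Qed.

Lemma hausdorff_closed_eq (X Y : ptopologicalType) (f g : X -> Y) :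
  hausdorff_space Y -> continuous f -> continuous g -> closed [set x | f x = g x].
Proof.
move=> hY cf cg x clx; apply: hY => A B nA nB.
have nAB : nbhs x (f @^-1` A `&` g @^-1` B).
  by apply: filterI; [exact: cf | exact: cg].
have [z [zE [zA zB]]] := clx _ nAB.
by exists (f z); split => //; rewrite zE.
Qed.

Lemma enum_basis (X : ptopologicalType) : @second_countable X ->
  exists e : nat -> set X, (forall n, open (e n)) /\
    forall x A, nbhs x A -> exists n, e n x /\ e n `<=` A.
Proof.
move=> [B cB [Bop Bb]].
have /countable_injP [f finj] := cB.
exists (fun n => \bigcup_(b in [set b | B b /\ f b = n]) b); split.
  by move=> n; apply: bigcup_open => b [Bb' _]; exact: Bop.
move=> x A nA.
have [U [BU Ux] UA] := Bb x A nA.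
exists (f U).
have -> : \bigcup_(b in [set b | B b /\ f b = f U]) b = U.
  apply/seteqP; split=> [z [b [Bb2 fb] bz]|z Uz].
    by have <- : b = U by apply: finj => //; rewrite inE.
  by exists U.
by [].
Qed.
Lemma groupoid_rd_cont (G : ptopologicalType) (G0 : set G) r d mul inv :
  is_lcsc_topological_groupoid G0 r d mul inv -> continuous r /\ continuous d.
Proof.
move=> [[[h0 h1 h2 h3 h4] hinv] [hmul cinv _ _ _]].
have rE : r = (fun x => (fun xy => mul xy.1 xy.2) (x, inv x)).
  by apply/funext => x /=; have [_ _ -> _] := hinv x.
have cr : continuous r.
  move=> x; rewrite rE.
  have Az : [set xy : G * G | d xy.1 = r xy.2] (x, inv x).
    by rewrite /=; have [-> _ _ _] := hinv x.
  have := (proj1 (subspace_continuousP _ _) hmul _ Az).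
  apply: cvg_trans => Q nQ.
  have hc : (fun x' => (x', inv x')) @ nbhs x --> (x, inv x).
    by apply: cvg_pair; [exact: cvg_id | exact: cinv].
  have H : nbhs x [set x' | d x' = r (inv x') -> Q (mul x' (inv x'))] := hc _ nQ.
  apply: filterS H => x' /= Px'; apply: Px'.
  by have [-> _ _ _] := hinv x'.
split => // x.
have -> : d = r \o inv by apply/funext => y /=; have [-> _ _ _] := hinv y.
by apply: continuous_comp; [exact: cinv | exact: cr].
Qed.

Lemma groupoid_g0_closed (G : ptopologicalType) (G0 : set G) r d mul inv :
  is_lcsc_topological_groupoid G0 r d mul inv -> closed G0.
Proof.
move=> hG; have [cr _] := @groupoid_rd_cont G _ _ _ _ _ hG.
move: hG => [[[h0 h1 _ _ _] _] [_ _ _ _ hH]].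
have -> : G0 = [set x | r x = x].
  apply/seteqP; split => [u /h1 [] //|x /= <-]; exact: (h0 x).1.
by apply: (@hausdorff_closed_eq G G r id) => // x; exact: cvg_id.
Qed.

Lemma borel_open (X : ptopologicalType) (A : set X) :
  open A -> measurable (A : set (BorelT X)).
Proof. by move=> oA; apply: sub_sigma_algebra. Qed.

Lemma borel_closed (X : ptopologicalType) (A : set X) :
  closed A -> measurable (A : set (BorelT X)).
Proof.
move=> cA; rewrite -[A]setCK; apply: measurableC; apply: borel_open.
exact: closed_openC.
Qed.

Lemma borel_cont (X Y : ptopologicalType) (f : X -> Y) :
  continuous f -> measurable_fun (setT : set (BorelT X)) (f : BorelT X -> BorelT Y).
Proof.
move=> cf; apply: (@measurability _ _ (BorelT X) (BorelT Y) setT f (@open Y)); first by [].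
move=> _ [B oB <-]; rewrite setTI; apply: borel_open.
by move: oB; apply: (proj1 (continuousP f)).
Qed.

Lemma hausdorff_closed_set1 (Y : ptopologicalType) (y : Y) :
  hausdorff_space Y -> closed [set y].
Proof. by move=> hY; apply: accessible_closed_set1; exact: hausdorff_accessible. Qed.

Lemma box_meas (S G T : ptopologicalType) :
  @second_countable S -> @second_countable G -> @second_countable T ->
  forall (dz : measure_display) (Z : measurableType dz) (h : Z -> (S * G * T)%type),
  (forall (B : set S) (D : set G) (C : set T), open B -> open D -> open C ->
     measurable (h @^-1` ((B `*` D) `*` C))) ->
  measurable_fun setT (h : Z -> BorelT (S * G * T)%type).
Proof.
move=> /enum_basis [eS [oS bS]] /enum_basis [eG [oG bG]] /enum_basis [eT [oT bT]].
move=> dz Z h hbox.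
apply: (@measurability _ _ Z (BorelT (S * G * T)%type) setT h (@open _)); first by [].
move=> _ [U oU <-]; rewrite setTI.
pose box (ijk : nat * nat * nat) := (eS ijk.1.1 `*` eG ijk.1.2) `*` eT ijk.2.
pose F ijk := [set z | box ijk `<=` U /\ box ijk z].
have -> : U = \bigcup_ijk F ijk.
  apply/seteqP; split => [[[s g] t] Uz|z [ijk _ [+ bz]]]; last by apply.
  have nU : nbhs (((s, g), t) : (S * G * T)%type) (U : set (S * G * T)%type).
    by apply: open_nbhs_nbhs.
  have [A [C [nA [nC AC]]]] := @nbhs_prod_rect _ _ _ _ _ nU.
  have [B [D [nB [nD BD]]]] := @nbhs_prod_rect _ _ _ _ _ nA.
  have [i [si iB]] := bS _ _ nB.
  have [j [gj jD]] := bG _ _ nD.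
  have [k [tk kC]] := bT _ _ nC.
  exists (i, j, k) => //; split => //.
  move=> [[s' g'] t'] [[/= /iB s'B /jD g'D] /kC t'C].
  by apply: AC; split => //=; apply: BD.
rewrite preimage_bigcup; apply: countable_bigcupT_measurable => // ijk.
have [sub|nsub] := pselect (box ijk `<=` U).
  have -> : F ijk = box ijk by apply/seteqP; split => [z []|z bz] //.
  by apply: hbox.
have -> : F ijk = set0 by apply/seteqP; split => [z [] //|z].
by rewrite preimage_set0.
Qed.



Lemma lemeas d (T : measurableType d) (R : realType) (mu : {measure set T -> \bar R})
  (A B : set T) : measurable A -> measurable B -> A `<=` B -> mu A <= mu B.
Proof. by move=> mA mB AB; apply: le_measure => //; rewrite inE. Qed.

Section KEY.
Context d d' (X : measurableType d) (Y : measurableType d') (R : realType)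
 (l : X -> {measure set Y -> \bar R})
 (ml : forall U, measurable U -> measurable_fun setT (l ^~ U))
 (F : nat -> set Y) (mF : forall n, measurable (F n)) (Fcov : \bigcup_n F n = setT)
 (Ffin : forall x n, l x (F n) < +oo).

Definition lk := l.
HB.instance Definition _ := isKernel.Build _ _ X Y R lk ml.

Lemma key_xsection A : measurable A -> measurable_fun setT (fun x => l x (xsection A x)).
Proof.
move=> mA.
have mD := seqDU_measurable mF.
have eq : (fun x => l x (xsection A x)) =
    (fun x => \sum_(n <oo | n \in setT) l x (xsection A x `&` seqDU F n)).
  apply/funext => x.
  rewrite -measure_bigcup //; last first.
  - move=> i j _ _ [z [[_ zi] [_ zj]]]; apply: (trivIset_seqDU F) => //.
    by exists z.
  - by move=> n _; apply: measurableI => //; exact: measurable_xsection.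
  by rewrite -setI_bigcupr -seqDU_bigcup_eq Fcov setIT.
rewrite eq; apply: ge0_emeasurable_sum => // n _.
have := @measurable_prod_subset_xsection_kernel _ _ X Y R lk (seqDU F n) (mD n).
move=> /(_ _ A mA) [] //.
move=> x; exists (fine (l x (seqDU F n)) + 1)%R => B mB.
have mDn : measurable (seqDU F n) by [].
have fin : l x (seqDU F n) \is a fin_num.
  rewrite ge0_fin_numE //; apply: le_lt_trans (Ffin x n).
  by apply: lemeas => //; exact: subDsetl.
rewrite /mrestr /= EFinD fineK //.
apply: (le_lt_trans (y := l x (seqDU F n))).
  by apply: lemeas => //; apply: measurableI.
by rewrite lteDl // lte01.
Qed.

Import HBNNSimple.
Lemma key_integral (k : X * Y -> \bar R) (k0 : forall z, 0 <= k z)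
  (mk : measurable_fun setT k) :
  measurable_fun setT (fun x => \int[l x]_y k (x, y)).
Proof.
pose k_ := nnsfun_approx measurableT mk.
apply: (@measurable_fun_xsection_integral _ _ X Y R k l k_).
- by move=> a b ab; exact/nd_nnsfun_approx.
- by move=> z; apply: cvg_nnsfun_approx => // ? ?; exact: k0.
- move=> n r; apply: key_xsection.
  have mk_ : measurable_fun setT (k_ n) by [].
  by have := mk_ measurableT [set r] (measurable_set1 r); rewrite setTI.
Qed.
End KEY.



Lemma cover_BSM (R : realType) (X Y : ptopologicalType) (X0 : set X) (pi : X -> Y)
  (Y0 : set Y) (lam : Y -> {measure set (BorelT X) -> \bar R}) :
  @second_countable X ->
  measurable (X0 : set (BorelT X)) ->
  (forall z, Y0 z -> measurable ((X0 `&` pi @^-1` [set z]) : set (BorelT X))) ->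
  locally_finite_BSM X0 pi Y0 (fun y => lam y) ->
  exists F : nat -> set X, [/\ (forall n, measurable (F n : set (BorelT X))),
    \bigcup_n F n = setT & forall z n, Y0 z -> lam z (F n) < +oo].
Proof.
move=> /enum_basis [e [oe be]] mX0 mfib [_ conc _ lf].
pose good n := exists U, [/\ open U, e n `<=` U & forall z, Y0 z -> lam z U < +oo].
pose F n := if n is n'.+1 then (if `[< good n' >] then e n' else set0) else ~` X0.
exists F; split.
- case => [|n] /=; first exact: measurableC.
  by case: ifP => _ //; apply: borel_open.
- apply/seteqP; split => // x _.
  have [X0x|nX0x] := pselect (X0 x); last by exists 0%N.
  have [U [oU Ux finU]] := lf x X0x.
  have [n [enx enU]] := be x U (open_nbhs_nbhs (conj oU Ux)).
  exists n.+1 => //=.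
  have -> : `[< good n >] = true by apply/asboolP; exists U.
  by [].
- move=> z [|n] Yz /=.
    rewrite (@le_lt_trans _ _ (lam z (~` (X0 `&` pi @^-1` [set z])))) //.
      apply: lemeas; [exact: measurableC|apply: measurableC; exact: mfib|].
      by apply: subsetC => ? [].
    by rewrite conc.
  case: asboolP => [[U [oU enU fU]]|_]; last by rewrite measure0.
  apply: le_lt_trans (fU z Yz).
  by apply: lemeas => //; apply: borel_open.
Qed.

Lemma BSM_conc (R : realType) (X Y : ptopologicalType) (X0 : set X) (pi : X -> Y)
  (Y0 : set Y) (lam : Y -> {measure set (BorelT X) -> \bar R}) :
  measurable (X0 : set (BorelT X)) ->
  (forall z, Y0 z -> measurable ((X0 `&` pi @^-1` [set z]) : set (BorelT X))) ->
  locally_finite_BSM X0 pi Y0 (fun y => lam y) ->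
  forall y (U : set (BorelT X)), Y0 y -> measurable U -> lam y U = lam y (U `&` X0).
Proof.
move=> mX0 mfib [_ conc _ _] y U Yy mU.
rewrite (measureDI (lam y) mU mX0).
rewrite [X in X + _](_ : _ = 0) ?add0e //.
apply/eqP; rewrite eq_le measure_ge0 andbT -(conc y Yy).
apply: lemeas; [exact: measurableD|apply: measurableC; exact: mfib|].
by move=> x [_ nX0] [].
Qed.

Lemma BSM_comp (R : realType) (X Y : ptopologicalType) (X0 : set X) (pi : X -> Y)
  (Y0 : set Y) (lam : Y -> {measure set (BorelT X) -> \bar R})
  (dz : measure_display) (Z : measurableType dz) (h : Z -> Y) :
  measurable (Y0 : set (BorelT Y)) ->
  measurable (X0 : set (BorelT X)) ->
  (forall z, Y0 z -> measurable ((X0 `&` pi @^-1` [set z]) : set (BorelT X))) ->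
  locally_finite_BSM X0 pi Y0 (fun y => lam y) ->
  measurable_fun setT (h : Z -> BorelT Y) -> (forall z, Y0 (h z)) ->
  forall U : set (BorelT X), measurable U ->
  measurable_fun setT (fun z => lam (h z) U).
Proof.
move=> mY0 mX0 mfib hB mh hY U mU.
have -> : (fun z => lam (h z) U) = (fun y : BorelT Y => lam y (U `&` X0)) \o h.
  by apply/funext => z /=; exact: (@BSM_conc _ _ _ _ _ _ _ mX0 mfib hB _ _ (hY z) mU).
apply: (measurable_comp mY0) => //.
  by move=> _ [z _ <-].
case: hB => _ _ hm _; apply: hm; first exact: measurableI.
exact: subIsetr.
Qed.

Section EtaMeasure.
Context (R : realType) (S G T : ptopologicalType)
  (mu : {measure set (BorelT S) -> \bar R}) (nu : {measure set (BorelT T) -> \bar R})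
  (y : G).
Hypothesis Hpre : forall E : set (BorelT (S * G * T)%type), measurable E ->
  forall s, measurable ((fun t => (s, y, t)) @^-1` E : set (BorelT T)).
Hypothesis Hsec : forall E : set (BorelT (S * G * T)%type), measurable E ->
  measurable_fun (setT : set (BorelT S))
    (fun s => \int[nu]_t (\1_E ((s, y, t) : (S * G * T)%type))%:E).

Definition etam (E : set (BorelT (S * G * T)%type)) :=
  \int[mu]_s \int[nu]_t (\1_E ((s, y, t) : (S * G * T)%type))%:E.

Lemma etam_inner (E : set (BorelT (S * G * T)%type)) s : measurable E ->
  \int[nu]_t (\1_E ((s, y, t) : (S * G * T)%type))%:E =
  nu ((fun t => (s, y, t)) @^-1` E).
Proof.
move=> mE; have := integral_indic nu measurableT (Hpre _ mE s); rewrite setIT => <-.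
by apply: eq_integral => t _; rewrite !indicE.
Qed.

Let etam0 : etam set0 = 0.
Proof. by rewrite /etam integral0_eq // => s _; rewrite integral0_eq // => t _; rewrite indicE in_set0. Qed.

Let etam_ge0 (E : set (BorelT (S * G * T)%type)) : 0 <= etam E.
Proof. by apply: integral_ge0 => s _; apply: integral_ge0 => t _; rewrite lee_fin. Qed.

Let etam_sigma_additive : semi_sigma_additive etam.
Proof.
move=> F mF tF mUF.
rewrite [X in _ --> X](_ : _ = \sum_(n <oo) etam (F n)).
  by apply/cvg_closeP; split; [exact: is_cvg_nneseries|rewrite closeE].
rewrite /etam -integral_nneseries//; first last.
  by move=> n x _; apply: integral_ge0 => t _; rewrite lee_fin.
  by move=> n; apply: Hsec.
apply: eq_integral => s _.
rewrite etam_inner //.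
under eq_eseriesr do rewrite etam_inner //.
apply/esym/cvg_lim => //=; rewrite preimage_bigcup.
apply: measure_sigma_additive.
  by move=> n; apply: Hpre.
move=> i j _ _ [t [ti tj]]; apply: tF => //.
by exists (s, y, t).
Qed.

HB.instance Definition _ := isMeasure.Build _ _ _ etam etam0 etam_ge0 etam_sigma_additive.

Lemma etam_exists : exists m : {measure set (BorelT (S * G * T)%type) -> \bar R},
  forall E, measurable E -> m E = etam E.
Proof. by exists etam. Qed.

End EtaMeasure.



Lemma closed_pre (X Y : ptopologicalType) (f : X -> Y) (A : set Y) :
  continuous f -> closed A -> closed (f @^-1` A).
Proof.
move=> cf cA.
have -> : f @^-1` A = ~` (f @^-1` (~` A)) by rewrite preimage_setC setCK.
apply: open_closedC; apply: open_comp; first by move=> x _; exact: cf.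
exact: closed_openC.
Qed.

Record gfacts (R : realType) (X : ptopologicalType) (H : HaarGroupoid R X) := {
  gf_sc : @second_countable X;
  gf_hd : hausdorff_space X;
  gf_rc : continuous (rng H);
  gf_dc : continuous (src H);
  gf_cl : closed (g0 H);
  gf_m : measurable (g0 H : set (BorelT X));
  gf_r0 : forall x, g0 H (rng H x);
  gf_d0 : forall x, g0 H (src H x) }.
Arguments gf_sc {R X H}. Arguments gf_hd {R X H}. Arguments gf_rc {R X H}.
Arguments gf_dc {R X H}. Arguments gf_cl {R X H}. Arguments gf_m {R X H}.
Arguments gf_r0 {R X H}. Arguments gf_d0 {R X H}.

Lemma get_gfacts (R : realType) (X : ptopologicalType) (H : HaarGroupoid R X) : @gfacts R X H.
Proof.
have hG := hg_groupoid H.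
have [cr cd] := @groupoid_rd_cont _ _ _ _ _ _ hG.
have cl := @groupoid_g0_closed _ _ _ _ _ _ hG.
move: hG => [[[h0 _ _ _ _] _] [_ _ sc _ hd]].
split => //; first exact: borel_closed.
- by move=> x; exact: (h0 x).1.
- by move=> x; exact: (h0 x).2.
Qed.

Lemma fib_meas (R : realType) (X Y : ptopologicalType) (HX : HaarGroupoid R X)
  (HY : HaarGroupoid R Y) (p : X -> Y) : continuous p ->
  forall z, measurable ((g0 HX `&` p @^-1` [set z]) : set (BorelT X)).
Proof.
move=> cp z; have fX := @get_gfacts R X HX; have fY := @get_gfacts R Y HY.
apply: measurableI; first exact: gf_m fX.
apply: borel_closed; apply: closed_pre => //.
exact: hausdorff_closed_set1 (gf_hd fY).
Qed.

Lemma indic_iff (R : realType) (X Y : Type) (A : set X) (B : set Y) x y :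
  (A x <-> B y) -> (\1_A x : R) = \1_B y.
Proof.
move=> h; rewrite !indicE.
have -> : (x \in A) = (y \in B).
  by apply/idP/idP => /set_mem /h /mem_set.
by [].
Qed.

Theorem proposition5p3 (R : realType) (S G T : ptopologicalType)
  (HS : HaarGroupoid R S) (HG : HaarGroupoid R G) (HT : HaarGroupoid R T)
  (p : S -> G) (q : T -> G)
  (hp : is_haar_hom HS HG p) (hq : is_haar_hom HT HG q)
  (gp : G -> {measure set (BorelT S) -> \bar R})
  (gq : G -> {measure set (BorelT T) -> \bar R})
  (hgp : locally_finite_BSM (g0 HS) p (g0 HG) (fun y => gp y))
  (hgq : locally_finite_BSM (g0 HT) q (g0 HG) (fun y => gq y))
  (dgp : is_disintegration (g0 HS) (g0 HG) (fun y => gp y) (hmu0 HS) (hmu0 HG))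
  (dgq : is_disintegration (g0 HT) (g0 HG) (fun y => gq y) (hmu0 HT) (hmu0 HG)) :
  locally_finite_BSM (pullback_units HS HG HT p q) (fun z : S * G * T => z.1.2) setT
    (eta_measure HG gp gq).
Proof.
have fS := @get_gfacts R S HS; have fG := @get_gfacts R G HG.
have fT := @get_gfacts R T HT.
have cp : continuous p by case: hp.
have cq : continuous q by case: hq.
have fibS := @fib_meas R S G HS HG p cp.
have fibT := @fib_meas R T G HT HG q cq.
have [FS [mFS FScov FSfin]] := @cover_BSM R S G (g0 HS) p (g0 HG) gp
  (gf_sc fS) (gf_m fS) (fun z _ => fibS z) hgp.
have [FT [mFT FTcov FTfin]] := @cover_BSM R T G (g0 HT) q (g0 HG) gq
  (gf_sc fT) (gf_m fT) (fun z _ => fibT z) hgq.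
have mlS : forall U : set (BorelT S), measurable U ->
    measurable_fun (setT : set (BorelT G)) (fun y => gp (rng HG y) U).
  apply: (@BSM_comp R S G (g0 HS) p (g0 HG) gp _ (BorelT G) (rng HG)) => //.
  - exact: (gf_m fG).
  - exact: (gf_m fS).
  - exact: (@borel_cont _ _ _ (gf_rc fG)).
  - exact: (gf_r0 fG).
have mlT : forall U : set (BorelT T), measurable U ->
    measurable_fun (setT : set (BorelT G)) (fun y => gq (src HG y) U).
  apply: (@BSM_comp R T G (g0 HT) q (g0 HG) gq _ (BorelT G) (src HG)) => //.
  - exact: (gf_m fG).
  - exact: (gf_m fT).
  - exact: (@borel_cont _ _ _ (gf_dc fG)).
  - exact: (gf_d0 fG).
pose h1 := fun z : (BorelT G * BorelT S * BorelT T)%type =>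
  ((z.1.2, z.1.1, z.2) : (S * G * T)%type).
have mh1 : measurable_fun setT (h1 : _ -> BorelT (S * G * T)%type).
  apply: (@box_meas S G T (gf_sc fS) (gf_sc fG) (gf_sc fT)) => B D C oB oD oC.
  have -> : h1 @^-1` ((B `*` D) `*` C) = (D `*` B) `*` C.
    by apply/seteqP; split => [[[y s] t] [[/= ? ?] ?]|[[y s] t] [[/= ? ?] ?]].
  by apply: measurableX; [apply: measurableX|]; exact: borel_open.
pose k1 (E : set (BorelT (S * G * T)%type)) :=
  fun z : (BorelT G * BorelT S * BorelT T)%type => ((\1_E (h1 z)) : R)%:E.
have mk1 : forall E : set (BorelT (S * G * T)%type), measurable E -> measurable_fun setT (k1 E).
  move=> E mE; apply/measurable_EFinP.
  exact: (measurableT_comp (measurable_indic mE) mh1).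
have mphi1 : forall E : set (BorelT (S * G * T)%type), measurable E -> measurable_fun setT
    (fun ys : (BorelT G * BorelT S)%type => \int[gq (src HG ys.1)]_t k1 E (ys, t)).
  move=> E mE.
  apply: (@key_integral _ _ (BorelT G * BorelT S)%type (BorelT T) R
     (fun ys => gq (src HG ys.1)) _ FT mFT FTcov).
  - by move=> U mU; exact: (measurableT_comp (mlT U mU) measurable_fst).
  - by move=> ys n; have := FTfin (src HG ys.1) n (gf_d0 fG _).
  - by move=> z; rewrite /k1 lee_fin.
  - exact: mk1.
split.
- move=> y _.
  have Hpre : forall E : set (BorelT (S * G * T)%type), measurable E ->
      forall s, measurable ((fun t => (s, y, t)) @^-1` E : set (BorelT T)).
    move=> E mE s.
    have mt : measurable_fun (setT : set (BorelT T))
        ((fun t => ((s, y, t) : (S * G * T)%type)) : _ -> BorelT (S * G * T)%type).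
      apply: (@box_meas S G T (gf_sc fS) (gf_sc fG) (gf_sc fT)) => B D C oB oD oC.
      have [BD|nBD] := pselect (B s /\ D y).
        have -> : (fun t => ((s, y, t) : (S * G * T)%type)) @^-1` ((B `*` D) `*` C) = C.
          by apply/seteqP; split => [t [] //|t Ct]; split => //.
        exact: borel_open.
      have -> : (fun t => ((s, y, t) : (S * G * T)%type)) @^-1` ((B `*` D) `*` C) = set0.
        by apply/seteqP; split => [t [[/= ? ?] ?]|//]; apply: nBD.
      exact: measurable0.
    by have := mt measurableT E mE; rewrite setTI.
  have Hsec : forall E : set (BorelT (S * G * T)%type), measurable E ->
      measurable_fun (setT : set (BorelT S))
      (fun s => \int[gq (src HG y)]_t (\1_E ((s, y, t) : (S * G * T)%type))%:E).
    move=> E mE; have H := measurable_fun_pair2 (y : BorelT G) (mphi1 E mE); exact H.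
  have [m hm] := @etam_exists R S G T (gp (rng HG y)) (gq (src HG y)) y Hpre Hsec.
  by exists m => E mE; rewrite hm.
- move=> y _; rewrite /eta_measure.
  set A := _ `&` _.
  pose Bs := g0 HS `&` p @^-1` [set rng HG y].
  pose Bt := g0 HT `&` q @^-1` [set src HG y].
  have mBs : measurable (Bs : set (BorelT S)) := fibS (rng HG y).
  have mBt : measurable (Bt : set (BorelT T)) := fibT (src HG y).
  have mnBs : measurable (~` Bs : set (BorelT S)) by exact: measurableC.
  have mnBt : measurable (~` Bt : set (BorelT T)) by exact: measurableC.
  case: (hgp) => _ concS _ _; case: (hgq) => _ concT _ _.
  rewrite (eq_integral (fun s' : BorelT S =>
    (\1_(~` Bs) s')%:E * gq (src HG y) setT)); last first.
    move=> s' _.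
    have [Bss'|nBss'] := pselect (Bs s').
      rewrite indicE memNset ?mul0e; last by move=> /(_ Bss').
      rewrite (eq_integral (fun t' : BorelT T => (\1_(~` Bt) t')%:E)); last first.
        move=> t' _; congr (_%:E); apply: indic_iff.
        move: Bss' => [/= Ss' ps']; rewrite /A /pullback_units /=.
        split => [nA [Tt' qt']|nBt [[/= _ Tt' _ qt'] _]]; last by apply: nBt.
        by apply: nA; split => //; split => //.
      by rewrite integral_indic // setIT concT //; exact: (gf_d0 fG).
    rewrite indicE mem_set // mul1e.
    rewrite (eq_integral (fun t' : BorelT T => (\1_setT t')%:E)); last first.
      move=> t' _; congr (_%:E); apply: indic_iff.
      split => // _ [[/= Ss' _ ps' _] _]; apply: nBss'; split => //.
    by rewrite integral_indic // setIT.
  rewrite ge0_integralZr //; last by apply/measurable_EFinP; exact: measurable_indic.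
  by rewrite integral_indic // setIT concS ?mul0e //; exact: (gf_r0 fG).
- move=> E mE _.
  have FSfin' : forall (y : BorelT G) n, gp (rng HG y) (FS n) < +oo.
    by move=> y n; have := FSfin (rng HG y) n (gf_r0 fG _).
  have k0 : forall ys : (BorelT G * BorelT S)%type,
      0 <= \int[gq (src HG ys.1)]_t k1 E (ys, t).
    by move=> z; apply: integral_ge0 => t _; rewrite /k1 lee_fin.
  have H := @key_integral _ _ (BorelT G) (BorelT S) R (fun y => gp (rng HG y))
    mlS FS mFS FScov FSfin' _ k0 (mphi1 E mE).
  exact H.
- move=> [[s g] t] [/= Ss Tt rg dg].
  case: hgp => _ _ _ /(_ s Ss) [US [oUS USs USfin]].
  case: hgq => _ _ _ /(_ t Tt) [UT [oUT UTt UTfin]].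
  exists ((US `*` setT) `*` UT); split.
  - by apply: open_setX' => //; apply: open_setX' => //; exact: openT.
  - by [].
  move=> y _; rewrite /eta_measure.
  have mUT : measurable (UT : set (BorelT T)) by exact: borel_open.
  have mUS : measurable (US : set (BorelT S)) by exact: borel_open.
  rewrite (eq_integral (fun s' : BorelT S => (\1_US s')%:E * gq (src HG y) UT)); last first.
    move=> s' _.
    have [USs'|nUSs'] := pselect (US s').
      rewrite indicE mem_set // mul1e.
      rewrite (eq_integral (fun t' : BorelT T => (\1_UT t')%:E)); last first.
        move=> t' _; congr (_%:E); apply: indic_iff.
        by split => [[] //|?]; split.
      by rewrite integral_indic // setIT.
    rewrite indicE memNset // mul0e.
    apply: integral0_eq => t' _.
    by rewrite indicE memNset // => -[[/= ? _] _].
  rewrite ge0_integralZr //.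
  - rewrite integral_indic // setIT.
    apply: lte_mul_pinfty => //.
      by rewrite ge0_fin_numE //; have := USfin (rng HG y) (gf_r0 fG _).
    by have := UTfin (src HG y) (gf_d0 fG _).
  - by apply/measurable_EFinP; exact: measurable_indic.
Qed.
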